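(* Let $\alpha>3/2$, $a(x)=|x|^{-\alpha}$ and $b(x)=\Delta\,a(x)$ for $x\in\mathbb{Z}_{\neq0}$, where $\Delta\in\mathbb{R}\setminus\{0,1,-1\}$. If $K:\mathbb{Z}_{\neq0}\to\mathbb{R}$ is an odd function satisfying $$K(u)a(v)-K(v)a(u)+K(u+v)\bigl(b(u)-b(v)\bigr)=0$$ for all $u,v\in\mathbb{Z}$ with $u,v,u+v\neq0$, then $K\equiv0$.
   Context: Equivalently: for the power-law XXZ chain $\hat H=\sum_{m<n}|m-n|^{-\alpha}\bigl(\hat S^x_m\hat S^x_n+\hat S^y_m\hat S^y_n+\Delta\hat S^z_m\hat S^z_n\bigr)$ with $\Delta\neq0,\pm1$, there is no nonzero conserved two-body operator of the form $\hat K=\sum_{n\in\mathbb{Z},\,r\neq0}K(r)(\hat S^x_n\hat S^y_{n+r}-\hat S^y_n\hat S^x_{n+r})$ with $K$ odd; the displayed functional equation is exactly the condition $[\hat H,\hat K]=0$. *)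

(* Defs.v *)
From Stdlib Require Import Reals ZArith.
Open Scope R_scope.

Definition pl_a (alpha : R) (x : Z) : R := Rpower (Rabs (IZR x)) (- alpha).

Definition pl_b (alpha Delta : R) (x : Z) : R := Delta * pl_a alpha x.

(* Main.v *)
Require Import Defs.
From Stdlib Require Import Reals ZArith Lra Lia.
Open Scope R_scope.

Lemma lin3 (Ku Kv Kw au av aw D : R) :
  Ku*av - Kv*au + Kw*(D*au - D*av) = 0 ->
  Kw*av - (-Kv)*aw + Ku*(D*aw - D*av) = 0 ->
  Kw*au - (-Ku)*aw + Kv*(D*aw - D*au) = 0 ->
  D*(D*D-1)*(au-av)*(aw-au)*(aw-av) * Ku = 0.
Proof.
  intros H1 H2 H3.
  transitivity ((aw*au - av*D*(aw-au)) * (Ku*av - Kv*au + Kw*(D*au - D*av))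
    + (-((-au)*au - D*(au-av)*D*(aw-au))) * (Kw*av - (-Kv)*aw + Ku*(D*aw - D*av))
    + ((-au)*av - D*(au-av)*aw) * (Kw*au - (-Ku)*aw + Kv*(D*aw - D*au))).
  - ring.
  - rewrite H1, H2, H3; ring.
Qed.

Lemma a_inj (alpha : R) (m n : Z) : 0 < alpha -> (0 < m)%Z -> (0 < n)%Z -> m <> n ->
  pl_a alpha m <> pl_a alpha n.
Proof.
  intros Ha Hm Hn Hmn H. unfold pl_a, Rpower in H.
  apply exp_inv in H.
  assert (Pm : 0 < IZR m) by (apply IZR_lt; lia).
  assert (Pn : 0 < IZR n) by (apply IZR_lt; lia).
  rewrite (Rabs_right (IZR m)) in H by lra.
  rewrite (Rabs_right (IZR n)) in H by lra.
  assert (ln (IZR m) = ln (IZR n)).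
  { apply Rmult_eq_reg_l with (- alpha); [exact H | lra]. }
  apply ln_inv in H0; auto. apply eq_IZR in H0. auto.
Qed.

Lemma a_opp (alpha : R) (m : Z) : pl_a alpha (- m) = pl_a alpha m.
Proof. unfold pl_a. rewrite opp_IZR, Rabs_Ropp. reflexivity. Qed.

Theorem mainTheorem5 (alpha Delta : R) (K : Z -> R) :
  3 / 2 < alpha ->
  Delta <> 0 -> Delta <> 1 -> Delta <> -1 ->
  (forall x : Z, x <> 0%Z -> K (- x)%Z = - K x) ->
  (forall u v : Z, u <> 0%Z -> v <> 0%Z -> (u + v)%Z <> 0%Z ->
     K u * pl_a alpha v - K v * pl_a alpha u
     + K (u + v)%Z * (pl_b alpha Delta u - pl_b alpha Delta v) = 0) ->
  forall x : Z, x <> 0%Z -> K x = 0.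
Proof.
  intros Hal H0 H1 Hm1 Hodd H.
  assert (Hpos : forall x, (0 < x)%Z -> K x = 0).
  { intros x Hx.
    set (u := x). set (v := (x + 1)%Z). set (w := (u + v)%Z).
    assert (E1 := H u v ltac:(unfold u; lia) ltac:(unfold v; lia) ltac:(unfold w,u,v in *; lia)).
    assert (E2 := H w (- v)%Z ltac:(unfold w,u,v; lia) ltac:(unfold v; lia) ltac:(unfold w,u,v; lia)).
    assert (E3 := H w (- u)%Z ltac:(unfold w,u,v; lia) ltac:(unfold u; lia) ltac:(unfold w,u,v; lia)).
    replace (w + - v)%Z with u in E2 by (unfold w; lia).
    replace (w + - u)%Z with v in E3 by (unfold w; lia).
    unfold pl_b in *. rewrite a_opp in E2, E3.
    rewrite Hodd in E2 by (unfold v; lia).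
    rewrite Hodd in E3 by (unfold u; lia).
    fold w in E1.
    assert (L := lin3 (K u) (K v) (K w) (pl_a alpha u) (pl_a alpha v) (pl_a alpha w) Delta E1 E2 E3).
    assert (Nuv := a_inj alpha u v ltac:(lra) ltac:(unfold u; lia) ltac:(unfold v; lia) ltac:(unfold u,v; lia)).
    assert (Nwu := a_inj alpha w u ltac:(lra) ltac:(unfold w,u,v; lia) ltac:(unfold u; lia) ltac:(unfold w,u,v; lia)).
    assert (Nwv := a_inj alpha w v ltac:(lra) ltac:(unfold w,u,v; lia) ltac:(unfold v; lia) ltac:(unfold w,u,v; lia)).
    assert (HD : Delta * Delta - 1 <> 0).
    { replace (Delta*Delta-1) with ((Delta-1)*(Delta+1)) by ring.
      apply Rmult_integral_contrapositive_currified; lra. }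
    apply Rmult_integral in L. destruct L as [L|L]; [|exact L].
    exfalso.
    repeat (apply Rmult_integral in L; destruct L as [L|L]); lra. }
  intros x Hx. destruct (Z.lt_trichotomy x 0) as [Hl|[He|Hg]].
  - replace x with (- (- x))%Z by lia. rewrite Hodd by lia. rewrite Hpos by lia. ring.
  - contradiction.
  - apply Hpos; exact Hg.
Qed.
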